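(* Let $(\omega_a)_{a\in\mathbb{Z}^d}$ be real frequencies satisfying the following non-resonance condition: there exist $\gamma>0$, $\nu>0$, $c_0>0$ such that for all $r\ge3$ and all non-resonant ${\boldsymbol j}\in\mathcal{Z}^r$, $$|\Omega({\boldsymbol j})|\ge\frac{\gamma c_0^r}{\mu({\boldsymbol j})^{\nu r}}.$$ Let $N$ be fixed and let $Q\in\mathcal{P}_k$ be a homogeneous polynomial of degree $k$. Then the homological equation $\{\chi,H_0\}-Z=Q$ admits a solution $(\chi,Z)$ of homogeneous polynomials of degree $k$ such that $Z$ is in $N$-normal form and $$\|Z\|\le\|Q\|,\qquad \|\chi\|\le\frac{N^{\nu k}}{\gamma c_0^k}\|Q\|.$$
   Context: $\mathcal{Z}=\mathbb{Z}^d\times\{\pm1\}$; for $j=(a,\delta)$, $|j|=|a|$ and $\bar j=(a,-\delta)$; $z\in\mathbb{C}^{\mathcal{Z}}$ identified with $(\xi,\eta)$ via $z_{(a,1)}=\xi_a$, $z_{(a,-1)}=\eta_a$. $H_0=\sum_a\omega_a\xi_a\eta_a$. Poisson bracket: $\{F,G\}=i\sum_a\big(\frac{\partial F}{\partial\eta_a}\frac{\partial G}{\partial\xi_a}-\frac{\partial F}{\partial\xi_a}\frac{\partial G}{\partial\eta_a}\big)$. For ${\boldsymbol j}=(j_1,\dots,j_\ell)$, $j_i=(a_i,\delta_i)$: $z_{\boldsymbol j}=z_{j_1}\cdots z_{j_\ell}$, momentum $\mathcal{M}({\boldsymbol j})=\sum\delta_ia_i$, divisor $\Omega({\boldsymbol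 j})=\sum_i\delta_i\omega_{a_i}$, $\mathcal{I}_\ell=\{{\boldsymbol j}:\mathcal{M}({\boldsymbol j})=0\}$, and for $\ell\ge3$, $\mu({\boldsymbol j})$ is the third largest of $|j_1|,\dots,|j_\ell|$. ${\boldsymbol j}$ is resonant (${\boldsymbol j}\in\mathcal{N}_\ell$) if $\ell$ is even and ${\boldsymbol j}$ is, up to order, $(i_1,\dots,i_{\ell/2},\bar i_1,\dots,\bar i_{\ell/2})$; otherwise non-resonant. $\mathcal{P}_k$: real polynomials $P=\sum_{\ell=2}^k\sum_{{\boldsymbol j}\in\mathcal{I}_\ell}a_{\boldsymbol j}z_{\boldsymbol j}$ with $a_{\bar{\boldsymbol j}}=\overline{a_{\boldsymbol j}}$ and bounded coefficients, with norm $\|P\|=\sum_\ell\sup_{{\boldsymbol j}\in\mathcal{I}_\ell}|a_{\boldsymbol j}|$. $\mathcal{J}_\ell(N)=\{{\boldsymbol j}\in\mathcal{I}_\ell:\mu({\boldsymbol j})>N\}$; $Z\in\mathcal{P}_k$ is in $N$-normal form if $Z=\sum_{\ell=3}^k\sum_{{\boldsymbol j}\in\mathcal{N}_\ell\cup\mathcal{J}_\ell(N)}a_{\boldsymbol j}z_{\boldsymbol j}$. *)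

(* Defs.v *)
From HB Require Import structures.
From mathcomp Require Import all_boot all_order all_algebra perm.
From mathcomp Require Import all_classical all_reals.
From mathcomp Require Import exp.
From mathcomp Require Import complex.
Set Implicit Arguments. Unset Strict Implicit. Unset Printing Implicit Defensive.
Import Order.TTheory GRing.Theory Num.Theory.
Local Open Scope ring_scope.
Local Open Scope classical_set_scope.

Section Defs.
Variables (R : realType) (d : nat).

Definition lattice := 'rV[int]_d.
(* the index set  Z^d x {+-1};  the boolean encodes delta (true = +1, false = -1) *)
Definition idx := (lattice * bool)%type.
Definition sgn (b : bool) : int := if b then 1 else -1.
Definition barj (j : idx) : idx := (j.1, ~~ j.2).

(* |a| := max(1, Euclidean norm of a)  (so that |a| >= 1 and mu > 0) *)
Definition absZ (a : lattice) : R :=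
  Num.max 1 (Num.sqrt (\sum_(i < d) ((a ord0 i)%:~R : R) ^+ 2)).
Definition absj (j : idx) : R := absZ j.1.

Definition mindex (l : nat) := 'I_l -> idx.

Definition momentum (l : nat) (j : mindex l) : lattice :=
  \sum_(i < l) ((j i).1 *~ sgn (j i).2).
Definition Omega (omega : lattice -> R) (l : nat) (j : mindex l) : R :=
  \sum_(i < l) ((sgn (j i).2)%:~R * omega (j i).1).
(* third largest of |j_1|,...,|j_l| (meaningful for l >= 3) *)
Definition mu (l : nat) (j : mindex l) : R :=
  nth 0 (sort (fun x y : R => y <= x) [seq absj (j i) | i <- enum 'I_l]) 2.
Definition resonant (l : nat) (j : mindex l) : Prop :=
  exists m : nat, l = (2 * m)%N /\
  exists (s : {perm 'I_l}) (f : nat -> idx),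
    forall k : 'I_l, j (s k) = if (k < m)%N then f k else barj (f (k - m)%N).

Definition cabs (z : R[i]) : R := Num.sqrt (complex.Re z ^+ 2 + complex.Im z ^+ 2).
Definition cconj (z : R[i]) : R[i] := Complex (complex.Re z) (- complex.Im z).

(* A homogeneous polynomial of degree k, sum_{j in I_k} a_j z_j, is represented
   by its coefficient family a : (Z^d x {+-1})^k -> C. *)
Definition coeffs (k : nat) := mindex k -> R[i].

Definition homog_poly (k : nat) (a : coeffs k) : Prop :=
  [/\ (forall j, momentum j != 0 -> a j = 0),
      (forall j, a (fun i => barj (j i)) = cconj (a j)) &
      exists B : R, forall j, cabs (a j) <= B].

Definition pnorm (k : nat) (a : coeffs k) : R :=
  sup [set cabs (a j) | j in [set j : mindex k | momentum j = 0]].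

(* Equality of polynomials (the coefficient family is not a unique representation
   since z_j does not depend on the order of j): equality of the coefficient of
   each monomial, computed by summing over all reorderings. *)
Definition poly_eq (k : nat) (a b : coeffs k) : Prop :=
  forall j : mindex k,
    \sum_(s : {perm 'I_k}) a (fun i => j (s i)) =
    \sum_(s : {perm 'I_k}) b (fun i => j (s i)).

(* Poisson bracket {chi, H_0} with H_0 = sum_a omega_a xi_a eta_a.
   With {F,G} = i sum_a (dF/deta_a dG/dxi_a - dF/dxi_a dG/deta_a) one gets
   {z_(a,delta), H_0} = - i delta omega_a z_(a,delta), hence by Leibniz
   {z_j, H_0} = - i Omega(j) z_j; so the bracket acts on coefficients by: *)
Definition bracket_H0 (omega : lattice -> R) (k : nat) (a : coeffs k) : coeffs k :=
  fun j => - 'i%C * (Omega omega j)%:C%C * a j.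

Definition normal_form (N : R) (k : nat) (a : coeffs k) : Prop :=
  forall j : mindex k, a j != 0 -> resonant j \/ N < mu j.

Definition nonres_cond (omega : lattice -> R) (gamma nu c0 : R) : Prop :=
  forall (r : nat) (j : mindex r), (3 <= r)%N -> ~ resonant j ->
    gamma * c0 ^+ r / (mu j `^ (nu * r%:R)) <= `|Omega omega j|.

End Defs.

(* Main.v *)
Require Import Defs.
From HB Require Import structures.
From mathcomp Require Import all_boot all_order all_algebra perm.
From mathcomp Require Import all_classical all_reals.
From mathcomp Require Import exp.
From mathcomp Require Import complex.
Import ComplexField.Normc.
Import Order.TTheory GRing.Theory Num.Theory.
Local Open Scope ring_scope.

Section H.
Variables (R : realType) (d : nat).

Lemma cabsE (z : R[i]) : cabs z = normc z.
Proof. by case: z. Qed.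

Lemma cconjE (z : R[i]) : cconj z = (z^*)%C.
Proof. by case: z. Qed.

Lemma normc_real (x : R) : normc (x%:C)%C = `|x|.
Proof. by rewrite /= expr0n /= addr0 sqrtr_sqr. Qed.

Lemma normc_i : normc ('i%C : R[i]) = 1.
Proof. by rewrite /= expr0n /= add0r expr1n sqrtr1. Qed.

Lemma mu_ge1 (k : nat) (j : mindex d k) : (3 <= k)%N -> 1 <= mu R j.
Proof.
move=> k3; rewrite /mu.
set s := sort _ _.
have hs : (2 < size s)%N by rewrite size_sort size_map size_enum_ord.
have := mem_nth 0 hs; rewrite mem_sort => /mapP [i _ ->].
by rewrite /absj /absZ le_max lexx.
Qed.

Lemma Omega_bar (omega : lattice d -> R) (k : nat) (j : mindex d k) :
  Omega omega (fun i => barj (j i)) = - Omega omega j.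
Proof.
rewrite /Omega -sumrN; apply: eq_bigr => i _ /=.
by case: (j i) => a [] /=; rewrite ?mulN1r ?mul1r ?opprK.
Qed.

Lemma mu_bar (k : nat) (j : mindex d k) : mu R (fun i => barj (j i)) = mu R j.
Proof. by []. Qed.

Lemma resonant_bar (k : nat) (j : mindex d k) :
  resonant j -> resonant (fun i => barj (j i)).
Proof.
move=> [m [km [s [f hf]]]]; exists m; split=> //; exists s, (fun n => barj (f n)).
by move=> x; rewrite hf; case: ifP.
Qed.

Lemma barjK (x : idx d) : barj (barj x) = x.
Proof. by case: x => a b; rewrite /barj /= negbK. Qed.


Lemma nz_iO (x : R) : x != 0 -> (-'i%C * x%:C%C : R[i]) != 0.
Proof. move=> hx; apply/eqP=> /(congr1 (@complex.Im R)) /=; simpc=> /eqP; by rewrite oppr_eq0 (negbTE hx). Qed.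

Lemma conj_iO (x : R) : (((-'i%C * x%:C%C : R[i]))^*)%C = -'i%C * (-x)%:C%C.
Proof. by apply/eqP; rewrite eq_complex /=; simpc. Qed.

Lemma conj_divO (a : R[i]) (x : R) :
  ((a / (-'i%C * x%:C%C))^*)%C = (a^*)%C / (-'i%C * (-x)%:C%C).
Proof. rewrite rmorphM fmorphV; congr (_ * _^-1); exact: conj_iO. Qed.

Lemma cabs_ge0 (z : R[i]) : 0 <= cabs z.
Proof. exact: sqrtr_ge0. Qed.

End H.

Theorem proposition2p4 (R : realType) (d : nat) (omega : lattice d -> R)
    (gamma nu c0 : R) (N k : nat) (Q : coeffs R d k) :
  0 < gamma -> 0 < nu -> 0 < c0 ->
  nonres_cond omega gamma nu c0 ->
  (3 <= k)%N ->
  homog_poly Q ->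
  exists (chi Z : coeffs R d k),
    [/\ homog_poly chi, homog_poly Z, normal_form N%:R Z &
        poly_eq (fun j => bracket_H0 omega chi j - Z j) Q] /\
    pnorm Z <= pnorm Q /\
    pnorm chi <= (N%:R `^ (nu * k%:R)) / (gamma * c0 ^+ k) * pnorm Q.
Proof.
move=> g0 nu0 c00 hnr k3 [Qm Qr [B hB]].
pose P (j : mindex d k) := resonant j \/ N%:R < mu R j.
pose chi : coeffs R d k := fun j => if pselect (P j) then 0
   else Q j / (- 'i%C * (Omega omega j)%:C%C).
pose Z : coeffs R d k := fun j => if pselect (P j) then - Q j else 0.
have bbK : forall j : mindex d k, (fun i => barj (barj (j i))) = j.
  by move=> j; apply: funext => i; rewrite barjK.
have Pbar : forall j, P (fun i => barj (j i)) <-> P j.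
  move=> j; rewrite /P mu_bar; split; case=> [h|h]; try by right.
    by left; rewrite -[j]bbK; apply: resonant_bar.
  by left; apply: resonant_bar.
set C := N%:R `^ (nu * k%:R) / (gamma * c0 ^+ k).
have gc0 : 0 < gamma * c0 ^+ k by rewrite mulr_gt0 // exprn_gt0.
have C0 : 0 <= C by rewrite divr_ge0 ?powR_ge0 // ltW.
have OmP : forall j, ~ P j -> 0 < `|Omega omega j| /\ `|Omega omega j|^-1 <= C.
  move=> j nP.
  have nres : ~ resonant j by move=> h; apply: nP; left.
  have muN : mu R j <= N%:R by rewrite leNgt; apply/negP => h; apply: nP; right.
  have mu1 := @mu_ge1 R d k j k3.
  have mu0 : 0 < mu R j by apply: lt_le_trans mu1.
  have h := hnr k j k3 nres.
  have a0 : 0 < gamma * c0 ^+ k / mu R j `^ (nu * k%:R).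
    by rewrite divr_gt0 // powR_gt0.
  have O0 := lt_le_trans a0 h.
  split=> //.
  apply: (@le_trans _ _ ((gamma * c0 ^+ k / mu R j `^ (nu * k%:R))^-1)).
    by rewrite lef_pV2 ?posrE.
  rewrite invf_div /C; apply: ler_wpM2r; first by rewrite invr_ge0 ltW.
  apply: ge0_ler_powR; rewrite ?nnegrE ?ler0n ?(ltW mu0) //.
  by rewrite mulr_ge0 ?ler0n ?ltW.
have chibd : forall j, cabs (chi j) <= C * cabs (Q j).
  move=> j; rewrite /chi; case: pselect => hP.
    by rewrite cabsE normc0 mulr_ge0 // cabs_ge0.
  have [O0 OC] := OmP j hP.
  rewrite !cabsE normcM normcV normcM normcN normc_i mul1r normc_real mulrC.
  by rewrite ler_wpM2r // -cabsE cabs_ge0.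
have Zbd : forall j, cabs (Z j) <= cabs (Q j).
  move=> j; rewrite /Z; case: pselect => hP.
    by rewrite !cabsE normcN.
  by rewrite cabsE normc0 cabs_ge0.
pose j0 : mindex d k := fun _ => (0, true).
have m0 : momentum j0 = 0.
  by rewrite /momentum big1 // => i _; rewrite mul0rz.
have SQub : has_ubound [set cabs (Q j) | j in [set j : mindex d k | momentum j = 0]].
  by exists B => _ [j _ <-].
have SQ : forall j, momentum j = 0 -> cabs (Q j) <= pnorm Q.
  by move=> j hj; apply: ub_le_sup => //; exists j.
exists chi, Z; split; last split.
- split.
  + split.
    * move=> j hj; rewrite /chi (Qm j hj) mul0r; by case: pselect.
    * move=> j; rewrite /chi; case: pselect => h1; case: pselect => h2.
      - by rewrite cconjE rmorph0.
      - by exfalso; apply: h2; apply/Pbar.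
      - by exfalso; apply: h1; apply/Pbar.
      - by rewrite /= Qr Omega_bar !cconjE conj_divO.
    * by exists (C * B) => j; apply: le_trans (chibd j) _; rewrite ler_wpM2l.
  + split.
    * move=> j hj; rewrite /Z (Qm j hj) oppr0; by case: pselect.
    * move=> j; rewrite /Z; case: pselect => h1; case: pselect => h2.
      - by rewrite Qr !cconjE rmorphN.
      - by exfalso; apply: h2; apply/Pbar.
      - by exfalso; apply: h1; apply/Pbar.
      - by rewrite cconjE rmorph0.
    * by exists B => j; apply: le_trans (Zbd j) _.
  + move=> j; rewrite /Z; case: pselect => [h _ //|h]; by rewrite eqxx.
  + move=> j; apply: eq_bigr => s _.
    rewrite /bracket_H0 /chi /Z; case: pselect => hP.
      by rewrite mulr0 sub0r opprK.
    have [O0 _] := OmP _ hP.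
    rewrite subr0 mulrC divfK // nz_iO // -normr_gt0 //.
- apply: ge_sup; first by exists (cabs (Z j0)), j0.
  move=> _ [j hj <-]; exact: le_trans (Zbd j) (SQ j hj).
- apply: ge_sup; first by exists (cabs (chi j0)), j0.
  move=> _ [j hj <-]; apply: le_trans (chibd j) _; exact: ler_wpM2l (SQ j hj).
Qed.
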